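(* Fix any total budget $\mathrm{TB}\in\mathbb N_0$ and let $G$ be a game form. Suppose that Left has an optimal $0$-bid strategy in $(G,0)$. Then $G\ge 0$ if and only if $o(G,0)=\mathrm L$.
   Context: Game forms are defined recursively: $G=\{G^{\mathcal L}\mid G^{\mathcal R}\}$ where $G^{\mathcal L}$ (Left options) and $G^{\mathcal R}$ (Right options) are finite sets of game forms, and every game form has finite birthday (all play is finite). $0=\{\varnothing\mid\varnothing\}$. A follower of $G$ is any game form reachable from $G$ by a (possibly empty) sequence of moves of either player in any order. Fix a total budget $\mathrm{TB}\in\mathbb N_0$. The budget set is $\mathcal B=\{0,\dots,\mathrm{TB},\hat 0,\dots,\widehat{\mathrm{TB}}\}$: state $p$ (resp. $\hat p$) means Left holds $p$ dollars and Right holds $\mathrm{TB}-p$, and Right (resp. Left) holds the tie-breaking marker. A game $(G,\tilde p)$ is played as follows: at every position (terminal ones included) both players bid simultaneously, Left an integer $\ell$ with $0\le \ell\le p$, Right an integer $r$ with $0\le r\le \mathrm{TB}-p$. If Left holds the marker (state $\hat p$): if $\ell>r$ Left wins and moves to $(G^L,\widehat{p-\ell})$, or, including the marker in her payment (allowed when $\ell\ge r$), to $(G^L,p-\ell)$; if $\ell=r$ Left wins, the marker passes to Right, and play continues at $(G^L,p-\ell)$; if $\ell<r$ Right wins and moves to $(G^R,\widehat{p+r})$. Symmetrically when Right holds the marker (state $p$): if $r>\ell$ Right moves to $(G^R,p+r)$ or, including the marker, to $(G^R,\widehat{p+r})$; if $r=\ell$ Right wins, the marker passes to Left and play continues at $(G^R,\widehat{p+r})$;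 if $r<\ell$ Left moves to $(G^L,p-\ell)$. A player who wins a bid but has no option in the current game form loses. The partial outcome $o(G,\tilde p)\in\{\mathrm L,\mathrm R\}$ is the winner under optimal play (well defined via backward induction); $\mathrm L>\mathrm R$. Disjunctive sum: $G+H=\{G^{\mathcal L}+H,\,G+H^{\mathcal L}\mid G^{\mathcal R}+H,\,G+H^{\mathcal R}\}$. $G\ge H$ means: for every game form $X$ and every $\tilde p\in\mathcal B$, $o(G+X,\tilde p)\ge o(H+X,\tilde p)$. Left has an optimal $0$-bid strategy in $(G,\tilde p)$ if bidding $0$ is an optimal bid for Left at every follower position arising in play from $(G,\tilde p)$. *)

(* Defs.v *)
From mathcomp Require Import all_boot.
Set Implicit Arguments. Unset Strict Implicit. Unset Printing Implicit Defensive.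

(* Game forms: a game form is given by a finite list of Left options and a
   finite list of Right options (lists represent the finite sets; duplicates
   are irrelevant for everything below). Finite birthday is automatic. *)
Inductive game : Type := Game of seq game & seq game.

Definition leftOpts (G : game) : seq game := let: Game l _ := G in l.
Definition rightOpts (G : game) : seq game := let: Game _ r := G in r.

Definition zero : game := Game [::] [::].

Fixpoint add (G H : game) {struct G} : game :=
  let: Game gl gr := G in
  let fix addG (H : game) : game :=
      let: Game hl hr := H in
      Game ([seq add g H | g <- gl] ++ [seq addG h | h <- hl])
           ([seq add g H | g <- gr] ++ [seq addG h | h <- hr])
  in addG H.

(* A state is a pair (p, m) with p : nat (Left's dollars,
   Right holds TB - p) and m : bool, where m = true means LEFT holds the
   tie-breaking marker (the paper's \hat p) and m = false means RIGHT holds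
   it (the paper's plain p).  Valid states have p <= TB.
   Outcomes are booleans: true = L, false = R (so L > R is true > false). *)

(* A winner of the bid without any option loses (has over [::] = false for
   Left; all over [::] = true for Right). *)
Definition round (o : game -> nat -> bool -> bool) (gl gr : seq game)
    (p : nat) (m : bool) (l r : nat) : bool :=
  if m then
    if r < l then has (fun g => o g (p - l) true || o g (p - l) false) gl
    else if l == r then has (fun g => o g (p - l) false) gl
    else all (fun g => o g (p + r) true) gr
  else
    if l < r then all (fun g => o g (p + r) false && o g (p + r) true) gr
    else if l == r then all (fun g => o g (p + r) true) gr
    else has (fun g => o g (p - l) false) gl.

Fixpoint outcome (TB : nat) (G : game) (p : nat) (m : bool) {struct G} : bool :=
  let: Game gl gr := G in
  has (fun l =>
         all (fun r => round (outcome TB) gl gr p m l r) (iota 0 (TB - p).+1))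
      (iota 0 p.+1).

Definition bid_wins (TB : nat) (G : game) (p : nat) (m : bool) (l : nat) : bool :=
  all (fun r => round (outcome TB) (leftOpts G) (rightOpts G) p m l r)
      (iota 0 (TB - p).+1).

Definition optimal_bid (TB : nat) (G : game) (p : nat) (m : bool) (l : nat) : bool :=
  outcome TB G p m ==> bid_wins TB G p m l.

(* Left has an optimal 0-bid strategy in (G,(p,m)): bidding 0 is optimal
   for Left at every position arising in play from (G,(p,m)) when Left
   always bids 0 (Right's bids, and both players' choices of options and of
   marker inclusion, are arbitrary). *)
Fixpoint zero_bid_opt (TB : nat) (G : game) (p : nat) (m : bool) {struct G} : bool :=
  let: Game gl gr := G in
  optimal_bid TB (Game gl gr) p m 0 &&
  all (fun r =>
         if m then
           if 0 < r then all (fun g => zero_bid_opt TB g (p + r) true) gr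
           else (* tie: Left wins, marker passes to Right *)
             all (fun g => zero_bid_opt TB g p false) gl
         else
           (* Right holds the marker: Right always wins the bid *)
           if 0 < r then
             all (fun g => zero_bid_opt TB g (p + r) false &&
                           zero_bid_opt TB g (p + r) true) gr
           else all (fun g => zero_bid_opt TB g p true) gr)
      (iota 0 (TB - p).+1).

Definition game_ge (TB : nat) (G H : game) : Prop :=
  forall (X : game) (p : nat) (m : bool), p <= TB ->
    outcome TB (add H X) p m ==> outcome TB (add G X) p m.

(* Main.v *)
Require Import Defs.
From mathcomp Require Import all_boot.
From mathcomp Require Import zify.
Set Implicit Arguments. Unset Strict Implicit.


Definition game_ind2 (P : game -> Prop)
  (H : forall gl gr, (forall g, List.In g gl -> P g) -> (forall g, List.In g gr -> P g) -> P (Game gl gr)) :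
  forall G, P G :=
  fix F (G : game) : P G :=
    match G with
    | Game gl gr =>
      H gl gr
        ((fix Fl (l : seq game) : forall g, List.In g l -> P g :=
           match l with
           | [::] => fun g (h : False) => match h with end
           | x :: l' => fun g h => match h with
                                   | or_introl e => eq_rect x P (F x) g e
                                   | or_intror h' => Fl l' g h' end
           end) gl)
        ((fix Fl (l : seq game) : forall g, List.In g l -> P g :=
           match l with
           | [::] => fun g (h : False) => match h with end
           | x :: l' => fun g h => match h with
                                   | or_introl e => eq_rect x P (F x) g e
                                   | or_intror h' => Fl l' g h' end
           end) gr)
    end.

Lemma allIn {T} (p : pred T) s : all p s <-> (forall x, List.In x s -> p x).
Proof.
elim: s => [|y s IH] /=; first by split.
split.
- move/andP=> [Hy Hs] x [<-|Hx] //; by apply IH.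
- move=> H; apply/andP; split; first by apply H; left.
  apply IH => x Hx; apply H; by right.
Qed.

Lemma hasIn {T} (p : pred T) s : has p s <-> exists x, List.In x s /\ p x.
Proof.
elim: s => [|y s IH] /=; first by split => // [[x []]].
split.
- case/orP => [Hy|Hs]; first by exists y; split => //; left.
  by case/IH: Hs => x [Hx Hp]; exists x; split => //; right.
- case=> x [[<-|Hx] Hp]; first by rewrite Hp.
  apply/orP; right; apply IH; by exists x.
Qed.

Lemma outE TB gl gr p m : outcome TB (Game gl gr) p m =
  has (fun l => all (fun r => round (outcome TB) gl gr p m l r) (iota 0 (TB - p).+1)) (iota 0 p.+1).
Proof. by []. Qed.

Lemma addE gl gr hl hr : add (Game gl gr) (Game hl hr) =
  Game ([seq add g (Game hl hr) | g <- gl] ++ [seq add (Game gl gr) h | h <- hl])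
       ([seq add g (Game hl hr) | g <- gr] ++ [seq add (Game gl gr) h | h <- hr]).
Proof. by []. Qed.

Section R.
Variables (o : game -> nat -> bool -> bool) (L R : seq game) (P : nat).
Lemma roundT_lt l r : r < l -> round o L R P true l r = has (fun g => o g (P-l) true || o g (P-l) false) L.
Proof. by rewrite /round => ->. Qed.
Lemma roundT_eq l : round o L R P true l l = has (fun g => o g (P-l) false) L.
Proof. by rewrite /round ltnn eqxx. Qed.
Lemma roundT_gt l r : l < r -> round o L R P true l r = all (fun g => o g (P+r) true) R.
Proof. move=> H; rewrite /round ltnNge (ltnW H) /= ltn_eqF //. Qed.
Lemma roundF_lt l r : l < r -> round o L R P false l r = all (fun g => o g (P+r) false && o g (P+r) true) R.
Proof. by rewrite /round => ->. Qed.
Lemma roundF_eq l : round o L R P false l l = all (fun g => o g (P+l) true) R.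
Proof. by rewrite /round ltnn eqxx. Qed.
Lemma roundF_gt l r : r < l -> round o L R P false l r = has (fun g => o g (P-l) false) L.
Proof. move=> H; rewrite /round ltnNge (ltnW H) /= gtn_eqF //. Qed.
End R.

Fixpoint Z (TB : nat) (G : game) (s : nat) (m : bool) {struct G} : bool :=
  let: Game gl gr := G in
  all (fun r => if m then (if 0 < r then all (fun g => Z TB g (s + r) true) gr
                           else has (fun g => Z TB g s false) gl)
               else (if 0 < r then all (fun g => Z TB g (s + r) false && Z TB g (s + r) true) gr
                     else all (fun g => Z TB g s true) gr))
      (iota 0 (TB - s).+1).

Lemma ZE TB gl gr s m : Z TB (Game gl gr) s m =
  all (fun r => if m then (if 0 < r then all (fun g => Z TB g (s + r) true) gr
                           else has (fun g => Z TB g s false) gl)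
               else (if 0 < r then all (fun g => Z TB g (s + r) false && Z TB g (s + r) true) gr
                     else all (fun g => Z TB g s true) gr))
      (iota 0 (TB - s).+1).
Proof. by []. Qed.

Lemma Z_at TB gl gr s m r : Z TB (Game gl gr) s m -> r <= TB - s ->
  (if m then (if 0 < r then all (fun g => Z TB g (s + r) true) gr
                           else has (fun g => Z TB g s false) gl)
               else (if 0 < r then all (fun g => Z TB g (s + r) false && Z TB g (s + r) true) gr
                     else all (fun g => Z TB g s true) gr)).
Proof. rewrite ZE => /allP H Hr; apply: H; rewrite mem_iota; lia. Qed.

Lemma ZT_pos TB gl gr s r : Z TB (Game gl gr) s true -> 0 < r -> r <= TB - s ->
  forall g, List.In g gr -> Z TB g (s + r) true.
Proof. move=> HZ Hr Hr2; move: (Z_at HZ Hr2); rewrite Hr => /allIn; apply. Qed.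
Lemma ZT_0 TB gl gr s : Z TB (Game gl gr) s true -> exists g, List.In g gl /\ Z TB g s false.
Proof. move=> HZ; move: (Z_at (r:=0) HZ (leq0n _)) => /= /hasIn; apply. Qed.
Lemma ZF_pos TB gl gr s r : Z TB (Game gl gr) s false -> 0 < r -> r <= TB - s ->
  forall g, List.In g gr -> Z TB g (s + r) false /\ Z TB g (s + r) true.
Proof. move=> HZ Hr Hr2; move: (Z_at HZ Hr2); rewrite Hr => /allIn H g Hg; exact/andP/H. Qed.
Lemma ZF_0 TB gl gr s : Z TB (Game gl gr) s false -> forall g, List.In g gr -> Z TB g s true.
Proof. move=> HZ; move: (Z_at (r:=0) HZ (leq0n _)) => /= /allIn; apply. Qed.

Lemma Z_mono1 TB G : forall s m, Z TB G s m -> Z TB G s.+1 m.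
Proof.
elim/game_ind2: G => gl gr IHl IHr s m HZ.
rewrite ZE; apply/allP => r; rewrite mem_iota => /andP [_ Hr].
have Hr' : r <= TB - s by lia.
move: (Z_at HZ Hr'); clear HZ; case: m; case: (posnP r) => [Er|Hp] /=.
- case/hasIn=> g [Hg HgZ]; apply/hasIn; exists g; split => //; exact: IHl.
- move/allIn=> H; apply/allIn => g Hg; rewrite addSn; exact: IHr (H g Hg).
- move/allIn=> H; apply/allIn => g Hg; exact: IHr (H g Hg).
- move/allIn=> H; apply/allIn => g Hg; case/andP: (H g Hg) => H1 H2.
  by rewrite addSn (IHr _ Hg _ _ H1) (IHr _ Hg _ _ H2).
Qed.

Lemma Z_mono TB G s s' m : s <= s' -> Z TB G s m -> Z TB G s' m.
Proof.
move=> /subnK <-; elim: (s' - s) => [|k IH] //= H.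
rewrite addSn; exact/Z_mono1/IH.
Qed.

Lemma Z_hat TB G : forall s, s < TB -> Z TB G s true -> Z TB G s.+1 false.
Proof.
elim/game_ind2: G => gl gr IHl IHr s Hs HZ.
rewrite ZE; apply/allP => r; rewrite mem_iota => /andP [_ Hr].
case: (posnP r) => [Er|Hp] /=.
- apply/allIn => g Hg.
  have := ZT_pos HZ (r:=1) (isT) ltac:(lia) Hg. by rewrite addn1.
- apply/allIn => g Hg; apply/andP; split.
  + have H1 := ZT_pos HZ Hp ltac:(lia) Hg.
    have := IHr g Hg (s + r) ltac:(lia) H1. by rewrite addSn.
  + have := ZT_pos HZ (r:=r.+1) isT ltac:(lia) Hg. by rewrite addSn addnS.
Qed.

Lemma out_bid TB xl xr p m : outcome TB (Game xl xr) p m ->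
  exists l, l <= p /\ bid_wins TB (Game xl xr) p m l.
Proof.
rewrite outE => /hasP [l]; rewrite mem_iota => /andP [_ Hl] H.
exists l; split => //; lia.
Qed.

Lemma bid_out TB xl xr p m l : l <= p -> bid_wins TB (Game xl xr) p m l -> outcome TB (Game xl xr) p m.
Proof.
move=> Hl H; rewrite outE; apply/hasP; exists l => //; rewrite mem_iota; lia.
Qed.

Lemma bid_at TB xl xr p m l r : bid_wins TB (Game xl xr) p m l -> r <= TB - p ->
  round (outcome TB) xl xr p m l r.
Proof. move=> /allP H Hr; apply: H; rewrite mem_iota; lia. Qed.

Lemma out_intro TB gl gr P M b : b <= P ->
  (forall r, r <= TB - P -> round (outcome TB) gl gr P M b r) -> outcome TB (Game gl gr) P M.
Proof.
move=> Hb H; rewrite outE; apply/hasP; exists b; first by rewrite mem_iota; lia.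
apply/allP => r; rewrite mem_iota => /andP [_ Hr]; apply: H; lia.
Qed.

Lemma zboE TB gl gr p m : zero_bid_opt TB (Game gl gr) p m =
  optimal_bid TB (Game gl gr) p m 0 &&
  all (fun r =>
         if m then
           if 0 < r then all (fun g => zero_bid_opt TB g (p + r) true) gr
           else all (fun g => zero_bid_opt TB g p false) gl
         else
           if 0 < r then
             all (fun g => zero_bid_opt TB g (p + r) false &&
                           zero_bid_opt TB g (p + r) true) gr
           else all (fun g => zero_bid_opt TB g p true) gr)
      (iota 0 (TB - p).+1).
Proof. by []. Qed.

Lemma zbo_Z TB G : forall p m, zero_bid_opt TB G p m -> outcome TB G p m -> Z TB G p m.
Proof.
elim/game_ind2: G => gl gr IHl IHr p m; rewrite zboE => /andP [Hopt Hall] Ho.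
have Hbw : bid_wins TB (Game gl gr) p m 0 by move: Hopt; rewrite /optimal_bid Ho.
rewrite ZE; apply/allP => r Hr; move: Hr (allP Hall r Hr); rewrite mem_iota => /andP [_ Hr] Hz.
have Hro := bid_at Hbw (r:=r) ltac:(lia).
clear Hall; case: m Ho Hopt Hbw Hro Hz => Ho Hopt Hbw Hro Hz.
- case: (posnP r) Hro Hz => [Er|Hp] Hro Hz.
  + subst r; rewrite roundT_eq subn0 in Hro.
    case/hasIn: Hro => g [Hg Hgo]; apply/hasIn; exists g; split; first exact: Hg.
    apply: (IHl g Hg) => //; move/allIn: Hz; apply; exact: Hg.
  + rewrite roundT_gt // in Hro; move/allIn: Hro => Hro; move/allIn: Hz => Hz.
    apply/allIn => g Hg; apply: (IHr g Hg); [exact: Hz | exact: Hro].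
- case: (posnP r) Hro Hz => [Er|Hp] Hro Hz.
  + subst r; rewrite roundF_eq addn0 in Hro.
    move/allIn: Hro => Hro; move/allIn: Hz => Hz.
    apply/allIn => g Hg; apply: (IHr g Hg); [exact: Hz | exact: Hro].
  + rewrite roundF_lt // in Hro; move/allIn: Hro => Hro; move/allIn: Hz => Hz.
    apply/allIn => g Hg; case/andP: (Hz g Hg) => Hz1 Hz2; case/andP: (Hro g Hg) => Ho1 Ho2.
    by rewrite !(IHr g Hg).
Qed.

Lemma eq_all_In {T} (p q : pred T) s : (forall x, List.In x s -> p x = q x) -> all p s = all q s.
Proof. elim: s => //= y s IH H; rewrite H; last by left. by rewrite IH // => x Hx; apply H; right. Qed.
Lemma eq_has_In {T} (p q : pred T) s : (forall x, List.In x s -> p x = q x) -> has p s = has q s.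
Proof. elim: s => //= y s IH H; rewrite H; last by left. by rewrite IH // => x Hx; apply H; right. Qed.

Lemma round_map TB f L R p m l r :
  (forall g, List.In g L \/ List.In g R -> forall p m, outcome TB (f g) p m = outcome TB g p m) ->
  round (outcome TB) (map f L) (map f R) p m l r = round (outcome TB) L R p m l r.
Proof.
move=> H; rewrite /round.
case: m; repeat case: ifP => _; rewrite ?has_map ?all_map;
  first [apply: eq_has_In | apply: eq_all_In] => g Hg /=; rewrite ?H //; tauto.
Qed.

Lemma add0E TB X : forall p m, outcome TB (add zero X) p m = outcome TB X p m.
Proof.
elim/game_ind2: X => xl xr IHl IHr p m.
have -> : add zero (Game xl xr) = Game (map (add zero) xl) (map (add zero) xr) by [].
rewrite !outE; apply: eq_has_In => l _; apply: eq_all_In => r _.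
apply: round_map => g [Hg|Hg] p' m'; [exact: IHl | exact: IHr].
Qed.

Lemma addE0 TB G : forall p m, outcome TB (add G zero) p m = outcome TB G p m.
Proof.
elim/game_ind2: G => gl gr IHl IHr p m.
have -> : add (Game gl gr) zero = Game (map (add^~ zero) gl) (map (add^~ zero) gr) by rewrite /zero addE !cats0.
rewrite !outE; apply: eq_has_In => l _; apply: eq_all_In => r _.
apply: round_map => g [Hg|Hg] p' m'; [exact: IHl | exact: IHr].
Qed.

Definition inv TB X q G s (M : bool) : Prop :=
  (M = false /\ outcome TB X q false /\ Z TB G s false) \/
  (M = true /\ outcome TB X q true /\ Z TB G s false) \/
  (M = true /\ bid_wins TB X q false 0 /\ Z TB G s true) \/
  (M = true /\ (exists l, 0 < l <= q /\ bid_wins TB X q false l) /\ Z TB G s false).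

Lemma hasX {p : pred game} {f h : game -> game} {s1 s2 : seq game} {x : game} :
  List.In x s2 -> p (h x) -> has p (map f s1 ++ map h s2).
Proof. move=> Hx Hp; rewrite has_cat !has_map; apply/orP; right; apply/hasIn; exists x; split; [exact Hx | exact Hp]. Qed.
Lemma hasG {p : pred game} {f h : game -> game} {s1 s2 : seq game} {g : game} :
  List.In g s1 -> p (f g) -> has p (map f s1 ++ map h s2).
Proof. move=> Hx Hp; rewrite has_cat !has_map; apply/orP; left; apply/hasIn; exists g; split; [exact Hx | exact Hp]. Qed.
Lemma allR (p : pred game) f h (s1 s2 : seq game) :
  (forall g, List.In g s1 -> p (f g)) -> (forall x, List.In x s2 -> p (h x)) ->
  all p (map f s1 ++ map h s2).
Proof. move=> H1 H2; rewrite all_cat !all_map; apply/andP; split; apply/allIn; [exact H1|exact H2]. Qed.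

Lemma main_inv TB G : forall X q s P M, P = q + s -> P <= TB -> inv TB X q G s M ->
  outcome TB (add G X) P M.
Proof.
elim/game_ind2: G => gl gr IHgl IHgr X.
elim/game_ind2: X => xl xr IHxl IHxr q s P M EP HP Hinv.
rewrite addE.
case: Hinv => [[-> [Ho HZ]] | [[-> [Ho HZ]] | [[-> [Hb HZ]] | [-> [[l [Hl Hb]] HZ]]]]].
-
  case: (out_bid Ho) => l [Hlq Hb].
  apply: (out_intro (b:=l)); first lia.
  move=> r Hr; have Hxr := bid_at Hb (r:=r) ltac:(lia).
  case: (ltngtP l r) => Hlr.
  + rewrite roundF_lt //; rewrite roundF_lt // in Hxr; move/allIn: Hxr => Hxr.
    apply: allR => [g Hg | x Hx]; cbv beta.
    * have [HZ1 HZ2] := ZF_pos HZ (r:=r) ltac:(lia) ltac:(lia) Hg.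
      apply/andP; split.
      -- apply: (IHgr g Hg (Game xl xr) q (s + r)); [lia|lia|].
         by left.
      -- apply: (IHgr g Hg (Game xl xr) q (s + r)); [lia|lia|].
         case: (posnP l) => [El|Hl0].
         ++ subst l; right; right; left; by split.
         ++ right; right; right; split => //; split => //; exists l; split => //; lia.
    * case/andP: (Hxr x Hx) => Hx1 Hx2; apply/andP; split.
      -- apply: (IHxr x Hx (q + r) s); [lia|lia|]; by left.
      -- apply: (IHxr x Hx (q + r) s); [lia|lia|]; by right; left.
  + rewrite roundF_gt //; rewrite roundF_gt // in Hxr.
    case/hasIn: Hxr => x [Hx Hxo]; apply: (hasX Hx); cbv beta.
    apply: (IHxl x Hx (q - l) s); [lia|lia|]; by left.
  + subst r; rewrite roundF_eq; rewrite roundF_eq in Hxr; move/allIn: Hxr => Hxr.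
    apply: allR => [g Hg | x Hx]; cbv beta.
    * apply: (IHgr g Hg (Game xl xr) q (s + l)); [lia|lia|].
      case: (posnP l) => [El|Hl0].
      -- subst l; right; right; left; split => //; split => //.
         rewrite addn0; exact: ZF_0 HZ g Hg.
      -- right; right; right; split => //; split.
         ++ exists l; split => //; lia.
         ++ by case: (ZF_pos HZ (r:=l) Hl0 ltac:(lia) Hg).
    * apply: (IHxr x Hx (q + l) s); [lia|lia|]; right; left; split => //; split => //.
      exact: Hxr.
-
  case: (out_bid Ho) => l [Hlq Hb].
  apply: (out_intro (b:=l)); first lia.
  move=> r Hr; have Hxr := bid_at Hb (r:=r) ltac:(lia).
  case: (ltngtP l r) => Hlr.
  + rewrite roundT_gt //; rewrite roundT_gt // in Hxr; move/allIn: Hxr => Hxr.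
    apply: allR => [g Hg | x Hx]; cbv beta.
    * have [HZ1 HZ2] := ZF_pos HZ (r:=r) ltac:(lia) ltac:(lia) Hg.
      apply: (IHgr g Hg (Game xl xr) q (s + r)); [lia|lia|].
      by right; left.
    * apply: (IHxr x Hx (q + r) s); [lia|lia|]; right; left; split => //; split => //.
      exact: Hxr.
  + rewrite roundT_lt //; rewrite roundT_lt // in Hxr.
    case/hasIn: Hxr => x [Hx /orP Hxo]; apply: (hasX Hx); cbv beta.
    apply/orP; case: Hxo => Hxo; [left|right].
    * apply: (IHxl x Hx (q - l) s); [lia|lia|]; by right; left.
    * apply: (IHxl x Hx (q - l) s); [lia|lia|]; by left.
  + subst r; rewrite roundT_eq; rewrite roundT_eq in Hxr.
    case/hasIn: Hxr => x [Hx Hxo]; apply: (hasX Hx); cbv beta.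
    apply: (IHxl x Hx (q - l) s); [lia|lia|]; by left.
-
  apply: (out_intro (b:=0)); first lia.
  move=> r Hr.
  case: (posnP r) => [Er|Hr0].
  + subst r; rewrite roundT_eq subn0.
    case: (ZT_0 HZ) => g [Hg HgZ]; apply: (hasG Hg); cbv beta.
    apply: (IHgl g Hg (Game xl xr) q s); [lia|lia|]; left; split => //; split => //.
    exact: bid_out Hb.
  + rewrite roundT_gt //.
    apply: allR => [g Hg | x Hx]; cbv beta.
    * apply: (IHgr g Hg (Game xl xr) q (s + r)); [lia|lia|].
      right; right; left; split => //; split => //; exact: ZT_pos HZ Hr0 ltac:(lia) g Hg.
    * have Hxr := bid_at Hb (r:=r.-1) ltac:(lia).
      have Hxo : outcome TB x (q + r.-1) true.
        case: (posnP r.-1) Hxr => [E1|H1] Hxr.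
        -- rewrite E1 roundF_eq in Hxr; rewrite E1; move/allIn: Hxr; apply; exact Hx.
        -- rewrite roundF_lt // in Hxr; move/allIn: Hxr => Hxr; by case/andP: (Hxr x Hx).
      apply: (IHxr x Hx (q + r.-1) s.+1); [lia|lia|].
      right; left; split => //; split => //; apply: Z_hat => //; lia.
-
  apply: (out_intro (b:=l.-1)); first lia.
  move=> r Hr.
  have Hxr := bid_at Hb (r:=r) ltac:(lia).
  case: (ltnP r l) => Hrl.
  + rewrite roundF_gt // in Hxr; case/hasIn: Hxr => x [Hx Hxo].
    have IHx : outcome TB (add (Game gl gr) x) (P - l.-1) false.
      apply: (IHxl x Hx (q - l) s.+1); [lia|lia|]; left; split => //; split => //.
      exact: Z_mono1.
    case: (ltngtP r l.-1) => Hr1.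
    * rewrite roundT_lt //; apply: (hasX Hx); cbv beta; by rewrite IHx orbT.
    * lia.
    * subst r; rewrite roundT_eq; apply: (hasX Hx); exact IHx.
  + rewrite roundT_gt; last lia.
    apply: allR => [g Hg | x Hx]; cbv beta.
    * apply: (IHgr g Hg (Game xl xr) q (s + r)); [lia|lia|].
      right; right; right; split => //; split.
      -- exists l; split => //.
      -- by case: (ZF_pos HZ (r:=r) ltac:(lia) ltac:(lia) Hg).
    * have Hxo : outcome TB x (q + r) true.
        case: (ltngtP l r) Hxr => Hlr Hxr; first 2 [idtac]; try lia.
        -- rewrite roundF_lt // in Hxr; move/allIn: Hxr => Hxr; by case/andP: (Hxr x Hx).
        -- subst r; rewrite roundF_eq in Hxr; move/allIn: Hxr; apply; exact Hx.
      apply: (IHxr x Hx (q + r) s); [lia|lia|]; right; left; by split.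
Qed.

Lemma out_zero TB : outcome TB zero 0 false.
Proof.
rewrite /zero outE; apply/hasP; exists 0; first by rewrite mem_iota.
by apply/allP => r _; case: r.
Qed.

Theorem mainTheorem1 (TB : nat) (G : game) :
  zero_bid_opt TB G 0 false ->
  (game_ge TB G zero <-> outcome TB G 0 false = true).
Proof.
move=> Hz; split.
- move=> Hge; have := Hge zero 0 false (leq0n _).
  by rewrite add0E addE0 out_zero => /implyP; apply.
- move=> Ho X p m Hp; apply/implyP; rewrite add0E => HX.
  have HZ := zbo_Z Hz Ho.
  apply: (main_inv (q:=p) (s:=0)); [by rewrite addn0 | exact Hp |].
  case: m HX => HX; [right; left | left]; by split.
Qed.
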